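(* Let $N\ge 2$ and let $y_1,\dots,y_N$, $r_1,\dots,r_N$ be arbitrary real constants. For each integer $j$ let $\bm{x}_j$ be the $N$-dimensional column vector $\bm{x}_j=(|y_1+jr_1|,\,|y_2+jr_2|,\,\dots,\,|y_N+jr_N|)^T$. For a set $J=\{j_1<j_2<\dots<j_N\}$ of $N$ integers write $U(J)=\max[\bm{x}_{j_1}\ \bm{x}_{j_2}\ \dots\ \bm{x}_{j_N}]$ (ultradiscrete permanent). Then for all integers $1\le k_1<k_2<k_3\le N+1$, \[ U(\{1,\dots,N+1\}\setminus\{k_2\})+U(\{1,\dots,N+2\}\setminus\{k_1,k_3\}) \] \[ =\max\Bigl(U(\{1,\dots,N+1\}\setminus\{k_3\})+U(\{1,\dots,N+2\}\setminus\{k_1,k_2\}),\ U(\{1,\dots,N+1\}\setminus\{k_1\})+U(\{1,\dots,N+2\}\setminus\{k_2,k_3\})\Bigr). \]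
   Context: Ultradiscrete permanent (UP): for a real $N\times N$ matrix $A=(a_{ij})$, $\max A=\max[a_{ij}]_{1\le i,j\le N}\equiv\max_{\pi}\sum_{i=1}^N a_{i\pi(i)}$, the maximum over all permutations $\pi$ of $\{1,\dots,N\}$. For column vectors $\bm{b}_1,\dots,\bm{b}_N\in\mathbb{R}^N$, $\max[\bm{b}_1\ \dots\ \bm{b}_N]$ is the UP of the matrix with these columns. *)

(* Defs.v *)
From mathcomp Require Import all_boot all_order all_algebra all_fingroup.
Set Implicit Arguments. Unset Strict Implicit. Unset Printing Implicit Defensive.
Import Order.TTheory GRing.Theory Num.Theory.
Local Open Scope ring_scope.

(* The seed of the iterated max is the identity-permutation term, which is
   itself one of the maximised terms, so this is exactly the maximum. *)
Definition upm (R : realDomainType) (n : nat) (A : 'M[R]_n) : R :=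
  \big[Num.max/(\sum_i A i i)]_(s : 'S_n) \sum_i A i (s i).

Definition xvec (R : realDomainType) (n : nat) (y r : 'I_n -> R) (j : int)
  : 'cV[R]_n := \col_i `|y i + j%:~R * r i|.

Definition Uperm (R : realDomainType) (n : nat) (y r : 'I_n -> R)
  (J : seq int) : R :=
  upm (\matrix_(i < n, c < n) xvec y r (nth 0%R J c) i 0).

Definition range_minus (m : nat) (K : seq nat) : seq int :=
  [seq (j%:Z) | j <- iota 1 m & j \notin K].

(* Main.v *)
Require Import Defs.
From mathcomp Require Import all_boot all_order all_algebra all_fingroup.
From mathcomp Require Import zify ring lra.
Import Order.TTheory GRing.Theory Num.Theory.
Set Implicit Arguments. Unset Strict Implicit. Unset Printing Implicit Defensive.

Definition crs (p q s t : nat) : bool :=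
  ((p < s) && (s < q) && (q < t)) || ((s < p) && (p < t) && (t < q)).
Definition cr (a b c d : nat) : bool :=
  crs (minn a b) (maxn a b) (minn c d) (maxn c d).

Lemma cr_sym a b c d : cr a b c d = cr c d a b.
Proof. rewrite /cr /crs; by rewrite orbC. Qed.
Lemma cr_swl a b c d : cr a b c d = cr b a c d.
Proof. by rewrite /cr minnC maxnC. Qed.
Lemma cr_swr a b c d : cr a b c d = cr a b d c.
Proof. by rewrite /cr (minnC c) (maxnC c). Qed.
Lemma cr_self a b : cr a b a b = false.
Proof. rewrite /cr /crs; apply/negP; lia. Qed.

Lemma cr_lt a b c d : a < b -> c < d -> cr a b c d = crs a b c d.
Proof. by move=> h1 h2; rewrite /cr (minn_idPl (ltnW h1)) (maxn_idPr (ltnW h1))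
   (minn_idPl (ltnW h2)) (maxn_idPr (ltnW h2)). Qed.
Lemma cr_eq a c d : cr a a c d = false.
Proof. rewrite /cr minnn maxnn /crs. lia. Qed.

Lemma chord_core1 (x1 x2 x3 x4 p q : nat) : x1 < x2 -> x2 < x3 -> x3 < x4 -> p < q ->
 (crs p q x1 x2 + crs p q x3 x4 <= crs p q x1 x3 + crs p q x2 x4)%N.
Proof. move=> *. rewrite /crs. lia. Qed.
Lemma chord_core2 (x1 x2 x3 x4 p q : nat) : x1 < x2 -> x2 < x3 -> x3 < x4 -> p < q ->
 (crs p q x1 x4 + crs p q x2 x3 <= crs p q x1 x3 + crs p q x2 x4)%N.
Proof. move=> *. rewrite /crs. lia. Qed.

Lemma cr_cases a b c d : a < b -> c < d -> cr a b c d ->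
  (a < c < b /\ b < d) \/ (c < a < d /\ d < b).
Proof. move=> h1 h2; rewrite cr_lt // /crs. lia. Qed.

Lemma cr_neq a b : cr a b a b = false. Proof. exact: cr_self. Qed.

Lemma chord_pq a b c d p q : p < q -> a < b -> c < d -> cr a b c d ->
  (cr p q a c + cr p q b d <= cr p q a b + cr p q c d)%N /\
  (cr p q a d + cr p q b c <= cr p q a b + cr p q c d)%N.
Proof.
move=> hpq hab hcd hc.
have [[/andP[h1 h2] h3]|[/andP[h1 h2] h3]] := cr_cases hab hcd hc.
- rewrite (cr_swr p q b c).
  rewrite !(@cr_lt p q) //; try lia.
  split; first by apply: chord_core1.
  by apply: chord_core2.
- rewrite (cr_swr p q a c) (cr_swr p q b d) (cr_swr p q b c).
  rewrite !(@cr_lt p q) //; try lia.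
  split; first by rewrite (addnC (crs _ _ a b)); apply: chord_core1.
  rewrite (addnC (crs _ _ a b)) (addnC (crs _ _ a d)); by apply: chord_core2.
Qed.

Lemma chord_ab a b c d p q : a < b -> c < d -> cr a b c d ->
  (cr p q a c + cr p q b d <= cr p q a b + cr p q c d)%N /\
  (cr p q a d + cr p q b c <= cr p q a b + cr p q c d)%N.
Proof.
move=> hab hcd hc.
have [hpq|hpq|<-] := ltngtP p q; last by rewrite !cr_eq.
  exact: chord_pq.
rewrite ![cr p q _ _]cr_swl; exact: chord_pq.
Qed.

Lemma cr_neq_ab a b c d : cr a b c d -> a != b.
Proof. apply: contraTneq => ->; by rewrite cr_eq. Qed.
Lemma cr_neq_cd a b c d : cr a b c d -> c != d.
Proof. rewrite cr_sym; exact: cr_neq_ab. Qed.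

Lemma chord a b c d p q : cr a b c d ->
  (cr p q a c + cr p q b d <= cr p q a b + cr p q c d)%N /\
  (cr p q a d + cr p q b c <= cr p q a b + cr p q c d)%N.
Proof.
move=> hc; have hab := cr_neq_ab hc; have hcd := cr_neq_cd hc.
have [h1|h1|e] := ltngtP a b; last by rewrite e eqxx in hab.
- have [h2|h2|e] := ltngtP c d; last by rewrite e eqxx in hcd.
  + exact: chord_ab.
  + rewrite cr_swr in hc; have [] := chord_ab p q h1 h2 hc.
    rewrite !(cr_swr p q d) !(cr_swr p q c); move=> u v; split; lia.
- have [h2|h2|e] := ltngtP c d; last by rewrite e eqxx in hcd.
  + rewrite cr_swl in hc; have [] := chord_ab p q h1 h2 hc.
    rewrite !(cr_swr p q b) !(cr_swr p q a); move=> u v; split; lia.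
  + rewrite cr_swl cr_swr in hc; have [] := chord_ab p q h1 h2 hc.
    rewrite !(cr_swr p q b) !(cr_swr p q a) !(cr_swr p q d) !(cr_swr p q c).
    move=> u v; split; lia.
Qed.

Lemma cr_new1 a b c d : cr a b c d -> cr a c b d = false.
Proof. rewrite /cr /crs => h; apply/negP => h'. lia. Qed.
Lemma cr_new2 a b c d : cr a b c d -> cr a d b c = false.
Proof. rewrite /cr /crs => h; apply/negP => h'. lia. Qed.

Local Close Scope ring_scope.
Definition bt (a b x : nat) : bool := (a < x) (+) (b < x).
Lemma cr_xor a b x x' : x != a -> x != b -> x' != a -> x' != b ->
  cr a b x x' = bt a b x (+) bt a b x'.
Proof. rewrite /cr /crs /bt. move=> *. lia. Qed.

Local Close Scope ring_scope.

Definition valid (I C : finType) (s t : I -> C) (Z : {set I}) :=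
  forall i j, s i = t j -> (i \in Z) = (j \in Z).
Definition flipf (I C : finType) (Z : {set I}) (f g : I -> C) :=
  fun i => if i \in Z then g i else f i.
Definition Pt (I C : finType) (s t : I -> C) (Z : {set I}) := s @: Z :\: t @: setT.

Lemma valid_sym (I C : finType) (s t : I -> C) Z : valid s t Z -> valid t s Z.
Proof. by move=> h i j e; rewrite (h j i (esym e)). Qed.

Lemma valid_compl (I C : finType) (s t : I -> C) Z : valid s t Z -> valid s t (~: Z).
Proof. by move=> h i j e; rewrite !inE (h i j e). Qed.

Lemma flip_inj (I C : finType) (s t : I -> C) Z :
  injective s -> injective t -> valid s t Z -> injective (flipf Z s t).
Proof.
move=> hs ht hv i j; rewrite /flipf.
case: ifP => hi; case: ifP => hj.
- exact: ht.
- move=> e; have := hv j i (esym e); by rewrite hi hj.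
- move=> e; have := hv i j e; by rewrite hi hj.
- exact: hs.
Qed.

Lemma flip_img (I C : finType) (s t : I -> C) Z :
  injective s -> valid s t Z ->
  flipf Z s t @: setT = (s @: setT :\: Pt s t Z) :|: Pt t s Z.
Proof.
move=> hs hv; apply/setP => c; rewrite /Pt !inE.
apply/imsetP/idP.
- case=> i _ ->; rewrite /flipf; case: ifP => hi.
  + rewrite (imset_f t (in_setT i)) (imset_f t hi) /=; by case: (t i \in _).
  + have -> : (s i \in [set s x | x in Z]) = false.
      apply/negP => /imsetP[j hj ej]; by rewrite (hs _ _ ej) hj in hi.
    by rewrite andbF /= (imset_f s (in_setT i)).
- case/orP.
  + case/andP => hn /imsetP[j _ ec]; subst c.
    case: (boolP (j \in Z)) => hj; last by exists j; rewrite // /flipf (negbTE hj).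
    have : s j \in t @: setT.
      apply/negPn/negP => hn'; move/negP: hn; apply; apply/andP; split => //; exact: imset_f.
    case/imsetP => i _ e; exists i => //; by rewrite /flipf -(hv j i e) hj.
  + case/andP => _ /imsetP[i hi ->]; exists i; by rewrite // /flipf hi.
Qed.

Lemma shared (I C : finType) (s t : I -> C) Z : valid s t Z ->
  s @: Z :&: t @: setT = t @: Z :&: s @: setT.
Proof.
move=> hv; apply/setP => c; rewrite !inE; apply/andP/andP.
- case=> /imsetP[i hi ->] /imsetP[j _ e]; split; last exact: imset_f.
  by rewrite e imset_f // -(hv i j e).
- case=> /imsetP[i hi ->] /imsetP[j _ e]; split; last exact: imset_f.
  by rewrite e imset_f // (hv j i (esym e)).
Qed.

Lemma card_split (C : finType) (A B : {set C}) : #|A| = (#|A :\: B| + #|A :&: B|)%N.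
Proof. by rewrite addnC cardsID. Qed.

Lemma card_ports (I C : finType) (s t : I -> C) Z :
  injective s -> injective t -> valid s t Z -> #|Pt s t Z| = #|Pt t s Z|.
Proof.
move=> hs ht hv.
have e1 := card_split (s @: Z) (t @: setT).
have e2 := card_split (t @: Z) (s @: setT).
rewrite (card_imset _ hs) in e1; rewrite (card_imset _ ht) in e2.
rewrite (shared hv) in e1; rewrite /Pt; lia.
Qed.

Lemma parity (I C : finType) (s t : I -> C) Z (A : {set C}) :
  valid s t Z ->
  odd (#|s @: Z :&: A| + #|t @: Z :&: A|) = odd (#|Pt s t Z :&: A| + #|Pt t s Z :&: A|).
Proof.
move=> hv.
have e1 := card_split (s @: Z :&: A) (t @: setT).
have e2 := card_split (t @: Z :&: A) (s @: setT).
have h1 : s @: Z :&: A :\: t @: setT = Pt s t Z :&: A.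
  by apply/setP => c; rewrite !inE; case: (c \in A); rewrite ?andbF ?andbT.
have h2 : t @: Z :&: A :\: s @: setT = Pt t s Z :&: A.
  by apply/setP => c; rewrite !inE; case: (c \in A); rewrite ?andbF ?andbT.
have h3 : s @: Z :&: A :&: t @: setT = t @: Z :&: A :&: s @: setT.
  by rewrite -setIA (setIC A) setIA (shared hv) -setIA (setIC _ A) setIA.
rewrite e1 e2 h1 h2 h3.
rewrite !oddD; by case: (odd _); case: (odd _); case: (odd _).
Qed.

Lemma connect_pred (T : finType) (e : rel T) x y :
  connect e x y -> y != x -> exists2 z, connect e x z & e z y.
Proof.
case/connectP => p hp ->; case/lastP: p hp => [|p z] hp; first by rewrite eqxx.
rewrite rcons_path in hp; case/andP: hp => hp hz.
rewrite last_rcons => _; exists (last x p) => //; apply/connectP; by exists p.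
Qed.

Definition chainrel (I C : finType) (s t : I -> C) := [rel a b | s b == t a].
Definition chain (I C : finType) (s t : I -> C) (r0 : I) := [set r | connect (chainrel s t) r0 r].

Lemma chain_valid (I C : finType) (s t : I -> C) r0 :
  injective t -> s r0 \notin t @: setT -> valid s t (chain s t r0).
Proof.
move=> ht hr i j e; rewrite !inE; apply/idP/idP => h.
- have hne : i != r0.
    apply/eqP => ei; subst i; move/negP: hr; apply; rewrite e; exact: imset_f.
  have [z hz hzi] := connect_pred h hne.
  rewrite /= e in hzi; by rewrite (ht _ _ (eqP hzi)).
- apply: connect_trans h (connect1 _); by rewrite /= e.
Qed.

Lemma chain_port (I C : finType) (s t : I -> C) r0 :
  injective s -> s r0 \notin t @: setT -> Pt s t (chain s t r0) = [set s r0].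
Proof.
move=> hs hr; apply/setP => c; rewrite /Pt !inE; apply/idP/idP.
- case/andP => hn /imsetP[i]; rewrite inE => hi ec; subst c.
  case: (eqVneq i r0) => [->//|hne].
  have [z _ hzi] := connect_pred hi hne.
  move: hn; by rewrite /= (eqP hzi) imset_f.
- move/eqP ->; rewrite hr /=; apply: imset_f; by rewrite inE connect0.
Qed.

Lemma imset_compl (I C : finType) (s : I -> C) Z :
  injective s -> s @: (~: Z) = s @: setT :\: s @: Z.
Proof.
move=> hs; apply/setP => c; rewrite !inE; apply/imsetP/andP.
- case=> i; rewrite inE => hi ->; split; last exact: (imset_f _ (in_setT i)).
  apply/imsetP => -[j hj /hs e]; subst j; by rewrite hj in hi.
- case=> hn /imsetP[i _ ec]; subst c; exists i => //; rewrite inE; apply/negP => hi.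
  by move/negP: hn; apply; apply: imset_f.
Qed.

Lemma Pt_compl (I C : finType) (s t : I -> C) Z :
  injective s -> Pt s t (~: Z) = (s @: setT :\: t @: setT) :\: Pt s t Z.
Proof.
move=> hs; rewrite /Pt (imset_compl _ hs); apply/setP => c; rewrite !inE.
by case: (c \in s @: Z); case: (c \in t @: setT); case: (c \in s @: setT).
Qed.

Lemma sum3 (I : finType) (G : I -> nat) u v : u != v ->
  (\sum_i G i = G u + G v + \sum_(i | (i != u) && (i != v)) G i)%N.
Proof.
move=> huv; rewrite (bigD1 u) //= (bigD1 v) /=; last by rewrite eq_sym.
rewrite addnA; congr (_ + _)%N; apply: eq_bigl => i; by rewrite andbC.
Qed.

Lemma dsum_lt (I : finType) (F F' : I -> I -> nat) u v : u != v ->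
  (forall i j, (i != u) && (i != v) -> (j != u) && (j != v) -> F' i j = F i j) ->
  (forall e, (e != u) && (e != v) ->
     F' e u + F' e v + F' u e + F' v e <= F e u + F e v + F u e + F v e)%N ->
  (F' u u + F' u v + F' v u + F' v v < F u u + F u v + F v u + F v v)%N ->
  (\sum_i \sum_j F' i j < \sum_i \sum_j F i j)%N.
Proof.
move=> huv h1 h2 h3.
rewrite (sum3 _ huv) (sum3 (fun i => \sum_j F i j) huv).
rewrite (sum3 (F' u) huv) (sum3 (F' v) huv) (sum3 (F u) huv) (sum3 (F v) huv).
have e1 : (\sum_(i | (i != u) && (i != v)) \sum_j F' i j =
   \sum_(i | (i != u) && (i != v)) (F' i u + F' i v) +
   \sum_(i | (i != u) && (i != v)) \sum_(j | (j != u) && (j != v)) F i j)%N.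
  rewrite -big_split; apply: eq_bigr => i hi; rewrite (sum3 _ huv); congr (_ + _)%N.
  apply: eq_bigr => j hj; exact: h1.
have e2 : (\sum_(i | (i != u) && (i != v)) \sum_j F i j =
   \sum_(i | (i != u) && (i != v)) (F i u + F i v) +
   \sum_(i | (i != u) && (i != v)) \sum_(j | (j != u) && (j != v)) F i j)%N.
  rewrite -big_split; apply: eq_bigr => i hi; by rewrite (sum3 _ huv).
rewrite e1 e2.
have l1 : (\sum_(i | (i != u) && (i != v)) (F' i u + F' i v) +
           \sum_(i | (i != u) && (i != v)) F' u i + \sum_(i | (i != u) && (i != v)) F' v i <=
           \sum_(i | (i != u) && (i != v)) (F i u + F i v) +
           \sum_(i | (i != u) && (i != v)) F u i + \sum_(i | (i != u) && (i != v)) F v i)%N.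
  rewrite -!big_split /=; apply: leq_sum => i hi.
  have := h2 i hi; lia.
lia.
Qed.

Lemma odd_sum_b (I : finType) (P : pred I) (F : I -> nat) :
  odd (\sum_(i | P i) F i) = \big[addb/false]_(i | P i) odd (F i).
Proof. by rewrite (big_morph odd oddD (erefl : odd 0 = false)). Qed.

Lemma xorcard (I C : finType) (f : I -> C) (A : {set I}) (B : {set C}) : injective f ->
  \big[addb/false]_(u in A) (f u \in B) = odd #|f @: A :&: B|.
Proof.
move=> hf.
have -> : f @: A :&: B = f @: [set u in A | f u \in B].
  apply/setP => c; rewrite !inE; apply/andP/imsetP.
  - case=> /imsetP[i hi ->] hb; exists i => //; by rewrite inE hi.
  - case=> i; rewrite inE => /andP[hi hb] ->; split => //; exact: imset_f.
rewrite (card_imset _ hf) -sum1dep_card odd_sum_b.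
rewrite big_mkcondr /=; apply: eq_bigr => i _; by case: (f i \in B).
Qed.

Local Close Scope ring_scope.

Definition Xs (N m : nat) (K : seq nat) : {set 'I_N.+3} :=
  [set c : 'I_N.+3 | (0 < val c <= m) && (val c \notin K)].
Definition col (N k : nat) : 'I_N.+3 := inord k.

Ltac setx := let c := fresh "c" in apply/setP => c; rewrite !inE -!val_eqE /= ?inordK;
  try (have := ltn_ord c; lia).

Definition hk (N k1 k2 k3 : nat) := [/\ 0 < k1, k1 < k2, k2 < k3 & k3 <= N.+1].

Lemma sx0 N k1 k2 k3 : hk N k1 k2 k3 -> (Xs N N.+1 [:: k2]) :\: (Xs N N.+2 [:: k1; k3]) = [set (col N k1); (col N k3)].
Proof. case=> *; setx. Qed.
Lemma sx1 N k1 k2 k3 : hk N k1 k2 k3 -> (Xs N N.+2 [:: k1; k3]) :\: (Xs N N.+1 [:: k2]) = [set (col N k2); (col N N.+2)].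
Proof. case=> *; setx. Qed.
Lemma sx2 N k1 k2 k3 : hk N k1 k2 k3 -> ((Xs N N.+1 [:: k2]) :\ (col N k1)) :|: [set (col N k2)] = (Xs N N.+1 [:: k1]).
Proof. case=> *; setx. Qed.
Lemma sx3 N k1 k2 k3 : hk N k1 k2 k3 -> ((Xs N N.+2 [:: k1; k3]) :\ (col N k2)) :|: [set (col N k1)] = (Xs N N.+2 [:: k2; k3]).
Proof. case=> *; setx. Qed.
Lemma sx4 N k1 k2 k3 : hk N k1 k2 k3 -> ((Xs N N.+1 [:: k2]) :\ (col N k1)) :|: [set (col N N.+2)] = (Xs N N.+2 [:: k1; k2]).
Proof. case=> *; setx. Qed.
Lemma sx5 N k1 k2 k3 : hk N k1 k2 k3 -> ((Xs N N.+2 [:: k1; k3]) :\ (col N N.+2)) :|: [set (col N k1)] = (Xs N N.+1 [:: k3]).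
Proof. case=> *; setx. Qed.
Lemma sx6 N k1 k2 k3 : hk N k1 k2 k3 -> (Xs N N.+1 [:: k3]) :\: (Xs N N.+2 [:: k1; k2]) = [set (col N k1); (col N k2)].
Proof. case=> *; setx. Qed.
Lemma sx7 N k1 k2 k3 : hk N k1 k2 k3 -> (Xs N N.+2 [:: k1; k2]) :\: (Xs N N.+1 [:: k3]) = [set (col N k3); (col N N.+2)].
Proof. case=> *; setx. Qed.
Lemma sx8 N k1 k2 k3 : hk N k1 k2 k3 -> ((Xs N N.+1 [:: k3]) :\ (col N k2)) :|: [set (col N k3)] = (Xs N N.+1 [:: k2]).
Proof. case=> *; setx. Qed.
Lemma sx9 N k1 k2 k3 : hk N k1 k2 k3 -> ((Xs N N.+2 [:: k1; k2]) :\ (col N k3)) :|: [set (col N k2)] = (Xs N N.+2 [:: k1; k3]).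
Proof. case=> *; setx. Qed.
Lemma sx10 N k1 k2 k3 : hk N k1 k2 k3 -> ((Xs N N.+1 [:: k3]) :\ (col N k2)) :|: [set (col N N.+2)] = (Xs N N.+2 [:: k2; k3]).
Proof. case=> *; setx. Qed.
Lemma sx11 N k1 k2 k3 : hk N k1 k2 k3 -> ((Xs N N.+2 [:: k1; k2]) :\ (col N N.+2)) :|: [set (col N k2)] = (Xs N N.+1 [:: k1]).
Proof. case=> *; setx. Qed.
Lemma sx12 N k1 k2 k3 : hk N k1 k2 k3 -> (Xs N N.+1 [:: k1]) :\: (Xs N N.+2 [:: k2; k3]) = [set (col N k2); (col N k3)].
Proof. case=> *; setx. Qed.
Lemma sx13 N k1 k2 k3 : hk N k1 k2 k3 -> (Xs N N.+2 [:: k2; k3]) :\: (Xs N N.+1 [:: k1]) = [set (col N k1); (col N N.+2)].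
Proof. case=> *; setx. Qed.
Lemma sx14 N k1 k2 k3 : hk N k1 k2 k3 -> ((Xs N N.+1 [:: k1]) :\ (col N k2)) :|: [set (col N k1)] = (Xs N N.+1 [:: k2]).
Proof. case=> *; setx. Qed.
Lemma sx15 N k1 k2 k3 : hk N k1 k2 k3 -> ((Xs N N.+2 [:: k2; k3]) :\ (col N k1)) :|: [set (col N k2)] = (Xs N N.+2 [:: k1; k3]).
Proof. case=> *; setx. Qed.
Lemma sx16 N k1 k2 k3 : hk N k1 k2 k3 -> ((Xs N N.+1 [:: k1]) :\ (col N k2)) :|: [set (col N N.+2)] = (Xs N N.+2 [:: k1; k2]).
Proof. case=> *; setx. Qed.
Lemma sx17 N k1 k2 k3 : hk N k1 k2 k3 -> ((Xs N N.+2 [:: k2; k3]) :\ (col N N.+2)) :|: [set (col N k2)] = (Xs N N.+1 [:: k3]).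
Proof. case=> *; setx. Qed.

Local Close Scope ring_scope.
Local Open Scope ring_scope.

Definition sl (R : realFieldType) (y r : R) (x : nat) : R := if 0 <= y + x%:R * r then r else - r.

Lemma sl_pm (R : realFieldType) (y r : R) x : sl y r x = r \/ sl y r x = - r.
Proof. rewrite /sl; case: ifP; by [left|right]. Qed.

Lemma tang (R : realFieldType) (y r : R) (x z : nat) :
  `|y + x%:R * r| + sl y r x * (z%:R - x%:R) <= `|y + z%:R * r|.
Proof.
rewrite /sl; case: ifP => h.
  rewrite (ger0_norm h).
  have -> : y + x%:R * r + r * (z%:R - x%:R) = y + z%:R * r by ring.
  exact: ler_norm.
rewrite (ltr0_norm); last by rewrite ltNge h.
have -> : - (y + x%:R * r) + - r * (z%:R - x%:R) = - (y + z%:R * r) by ring.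
rewrite -normrN; exact: ler_norm.
Qed.

Lemma sl_mono (R : realFieldType) (y r : R) (x x' : nat) : (x < x')%N -> sl y r x <= sl y r x'.
Proof.
move=> hx; have hx' : x%:R < x'%:R :> R by rewrite ltr_nat.
rewrite /sl; case: ifP => h1; case: ifP => h2 //.
- move/negbT: h2; rewrite -ltNge => h2. nra.
- move/negbT: h1; rewrite -ltNge => h1. nra.
Qed.

Lemma swap_ok (R : realFieldType) (yu ru yv rv : R) (x z : nat) :
  ((x < z)%N /\ sl yv rv z <= sl yu ru x) \/ ((z < x)%N /\ sl yu ru x <= sl yv rv z) ->
  `|yu + x%:R * ru| + `|yv + z%:R * rv| <= `|yu + z%:R * ru| + `|yv + x%:R * rv|.
Proof.
move=> H.
have t1 := tang yu ru x z; have t2 := tang yv rv z x.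
suff : 0 <= (sl yu ru x - sl yv rv z) * (z%:R - x%:R) by nra.
case: H => [[h1 h2]|[h1 h2]].
  apply: mulr_ge0; first lra.
  by rewrite subr_ge0 ler_nat ltnW.
apply: mulr_le0; first lra.
by rewrite subr_le0 ler_nat ltnW.
Qed.

Definition swc (R : realFieldType) (yu ru yv rv : R) (x z : nat) :=
  ((x < z)%N /\ sl yv rv z <= sl yu ru x) \/ ((z < x)%N /\ sl yu ru x <= sl yv rv z).

Lemma pm4 (R : realFieldType) (ru rv a1 a2 b1 b2 : R) :
  (a1 = ru \/ a1 = - ru) -> (a2 = ru \/ a2 = - ru) ->
  (b1 = rv \/ b1 = - rv) -> (b2 = rv \/ b2 = - rv) ->
  a1 < b1 -> b1 < a2 -> a2 < b2 -> False.
Proof. by case=> ->; case=> ->; case=> ->; case=> ->; lra. Qed.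

Lemma pick1 (R : realFieldType) (yu ru yv rv : R) (x1 x2 z1 z2 : nat) :
  (x1 < z1)%N -> (z1 < x2)%N -> (x2 < z2)%N ->
  exists x z, (x = x1 \/ x = x2) /\ (z = z1 \/ z = z2) /\ swc yu ru yv rv x z.
Proof.
move=> h1 h2 h3.
have m1 : sl yu ru x1 <= sl yu ru x2 by apply: sl_mono; lia.
have m2 : sl yv rv z1 <= sl yv rv z2 by apply: sl_mono; lia.
have [e1|e1] := lerP (sl yv rv z1) (sl yu ru x1).
  by exists x1, z1; split; [left|split; [left|left]].
have [e2|e2] := lerP (sl yu ru x2) (sl yv rv z1).
  by exists x2, z1; split; [right|split; [left|right]].
have [e3|e3] := lerP (sl yv rv z2) (sl yu ru x2).
  by exists x2, z2; split; [right|split; [right|left]].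
exfalso; apply: (pm4 (sl_pm yu ru x1) (sl_pm yu ru x2) (sl_pm yv rv z1) (sl_pm yv rv z2)) => //.
Qed.

Lemma pick2 (R : realFieldType) (yu ru yv rv : R) (x1 x2 z1 z2 : nat) :
  (z1 < x1)%N -> (x1 < z2)%N -> (z2 < x2)%N ->
  exists x z, (x = x1 \/ x = x2) /\ (z = z1 \/ z = z2) /\ swc yu ru yv rv x z.
Proof.
move=> h1 h2 h3.
have m1 : sl yu ru x1 <= sl yu ru x2 by apply: sl_mono; lia.
have m2 : sl yv rv z1 <= sl yv rv z2 by apply: sl_mono; lia.
have [e1|e1] := lerP (sl yu ru x1) (sl yv rv z1).
  by exists x1, z1; split; [left|split; [left|right]].
have [e2|e2] := lerP (sl yv rv z2) (sl yu ru x1).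
  by exists x1, z2; split; [left|split; [right|left]].
have [e3|e3] := lerP (sl yu ru x2) (sl yv rv z2).
  by exists x2, z2; split; [right|split; [right|right]].
exfalso; apply: (pm4 (sl_pm yv rv z1) (sl_pm yv rv z2) (sl_pm yu ru x1) (sl_pm yu ru x2)) => //.
Qed.

Lemma pick_norm (R : realFieldType) (yu ru yv rv : R) (a b c d : nat) :
  (a < b)%N -> (c < d)%N -> cr a b c d ->
  exists x z, (x = a \/ x = b) /\ (z = c \/ z = d) /\ swc yu ru yv rv x z.
Proof.
move=> hab hcd hc; have [[/andP[h1 h2] h3]|[/andP[h1 h2] h3]] := cr_cases hab hcd hc.
  exact: pick1.
exact: pick2.
Qed.

Lemma pick (R : realFieldType) (yu ru yv rv : R) (a b c d : nat) : cr a b c d ->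
  exists x z, (x = a \/ x = b) /\ (z = c \/ z = d) /\ swc yu ru yv rv x z.
Proof.
move=> hc; have hab := cr_neq_ab hc; have hcd := cr_neq_cd hc.
have [h1|h1|e] := ltngtP a b; last by rewrite e eqxx in hab.
- have [h2|h2|e] := ltngtP c d; last by rewrite e eqxx in hcd.
    exact: pick_norm.
  rewrite cr_swr in hc; have [x [z [hx [hz hs]]]] := pick_norm yu ru yv rv h1 h2 hc.
  exists x, z; split=> //; split=> //; case: hz; tauto.
- have [h2|h2|e] := ltngtP c d; last by rewrite e eqxx in hcd.
    rewrite cr_swl in hc; have [x [z [hx [hz hs]]]] := pick_norm yu ru yv rv h1 h2 hc.
    exists x, z; split; first by case: hx; tauto. by [].
  rewrite cr_swl cr_swr in hc; have [x [z [hx [hz hs]]]] := pick_norm yu ru yv rv h1 h2 hc.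
  exists x, z; split; first by case: hx; tauto. split=> //; case: hz; tauto.
Qed.

Lemma uncross (R : realFieldType) (yu ru yv rv : R) (a b c d : nat) : cr a b c d ->
  let fu (x : nat) := `|yu + x%:R * ru| in let fv (x : nat) := `|yv + x%:R * rv| in
  [\/ fu a + fu b + fv c + fv d <= fu c + fu b + fv a + fv d,
      fu a + fu b + fv c + fv d <= fu d + fu b + fv c + fv a,
      fu a + fu b + fv c + fv d <= fu a + fu c + fv b + fv d |
      fu a + fu b + fv c + fv d <= fu a + fu d + fv c + fv b].
Proof.
move=> hc fu fv; have [x [z [hx [hz hs]]]] := pick yu ru yv rv hc.
have := swap_ok hs; rewrite -/(fu x) -/(fu z) -/(fv x) -/(fv z) => h.
move: h; case: hx => ->; case: hz => -> h.
- apply: Or41; lra.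
- apply: Or42; lra.
- apply: Or43; lra.
- apply: Or44; lra.
Qed.

Local Close Scope ring_scope.

Definition cfg N (X1 X2 : {set 'I_N.+3}) (s t : 'I_N -> 'I_N.+3) :=
  [/\ injective s, injective t, s @: setT = X1 & t @: setT = X2].
Definition Phi N (s t : 'I_N -> 'I_N.+3) := (\sum_i \sum_j cr (s i) (t i) (s j) (t j))%N.

Local Open Scope ring_scope.
Definition wt (R : realFieldType) N (y r : 'I_N -> R) i (c : 'I_N.+3) : R :=
  `|y i + (val c)%:R * r i|.
Definition W (R : realFieldType) N (y r : 'I_N -> R) (s t : 'I_N -> 'I_N.+3) : R :=
  \sum_i (wt y r i (s i) + wt y r i (t i)).
Local Close Scope ring_scope.

Lemma cfg_swap N X1 X2 (s t : 'I_N -> 'I_N.+3) : cfg X1 X2 s t -> cfg X2 X1 t s.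
Proof. by case. Qed.
Lemma W_swap (R : realFieldType) N (y r : 'I_N -> R) s t : W y r t s = W y r s t.
Proof. apply: eq_bigr => i _; by rewrite GRing.addrC. Qed.
Lemma Phi_swap N (s t : 'I_N -> 'I_N.+3) : Phi t s = Phi s t.
Proof. apply: eq_bigr => i _; apply: eq_bigr => j _; by rewrite cr_swl cr_swr. Qed.

Lemma flip_cfg N X1 X2 (s t : 'I_N -> 'I_N.+3) Z p q : cfg X1 X2 s t -> valid s t Z ->
  Pt s t Z = [set p] -> Pt t s Z = [set q] ->
  cfg (X1 :\ p :|: [set q]) (X2 :\ q :|: [set p]) (flipf Z s t) (flipf Z t s).
Proof.
case=> hs ht e1 e2 hv hp hq; split.
- exact: flip_inj.
- apply: flip_inj => //; exact: valid_sym.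
- by rewrite flip_img // e1 hp hq.
- by rewrite flip_img // ?e2 ?hp ?hq //; exact: valid_sym.
Qed.

Lemma W_flip (R : realFieldType) N (y r : 'I_N -> R) s t Z :
  W y r (flipf Z s t) (flipf Z t s) = W y r s t.
Proof. apply: eq_bigr => i _; rewrite /flipf; case: ifP => //; by rewrite GRing.addrC. Qed.

Lemma Phi_flip N (s t : 'I_N -> 'I_N.+3) Z : Phi (flipf Z s t) (flipf Z t s) = Phi s t.
Proof.
apply: eq_bigr => i _; apply: eq_bigr => j _; rewrite /flipf.
case: ifP => _; case: ifP => _ //;
  first [by rewrite cr_swl cr_swr | by rewrite cr_swl | by rewrite cr_swr].
Qed.

Lemma chain_ex N X1 X2 (s t : 'I_N -> 'I_N.+3) p : cfg X1 X2 s t -> p \in X1 :\: X2 ->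
  exists Z q, [/\ valid s t Z, Pt s t Z = [set p], Pt t s Z = [set q] & q \in X2 :\: X1].
Proof.
case=> hs ht e1 e2; rewrite inE => /andP[hp2 hp1].
move: hp1; rewrite -e1 => /imsetP[r0 _ er0].
have hr : s r0 \notin t @: setT by rewrite e2 -er0.
have hv := chain_valid ht hr.
have hP := chain_port hs hr.
have hc := card_ports hs ht hv.
rewrite hP cards1 in hc.
have [q hq] := cards1P (introT eqP (esym hc)).
exists (chain s t r0), q; split => //; first by rewrite hP er0.
have : q \in Pt t s (chain s t r0) by rewrite hq set11.
rewrite /Pt inE => /andP[hq1 /imsetP[i _ ei]].
rewrite inE hq1 -e2 ei /=; exact: imset_f.
Qed.

Local Close Scope ring_scope.

Lemma card1I (C : finType) (a : C) (B : {set C}) : #|[set a] :&: B| = nat_of_bool (a \in B).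
Proof.
case: (boolP (a \in B)) => h.
  by rewrite (setIidPl _) ?cards1 // sub1set.
have -> : [set a] :&: B = set0.
  apply/setP => c; rewrite !inE; case: eqP => // ->; by rewrite (negbTE h).
by rewrite cards0.
Qed.

Lemma xor_bt (I C : finType) (s t : I -> C) (Z : {set I}) (vl : C -> nat) (x : nat) :
  injective s -> injective t ->
  \big[addb/false]_(u in Z) bt (vl (s u)) (vl (t u)) x =
  odd (#|s @: Z :&: [set c | vl c < x]| + #|t @: Z :&: [set c | vl c < x]|).
Proof.
move=> hs ht; rewrite oddD -(xorcard _ _ hs) -(xorcard _ _ ht) -big_split /=.
by apply: eq_bigr => u _; rewrite !inE.
Qed.

Lemma cross_ex N k1 k2 k3 (s t : 'I_N -> 'I_N.+3) Z : hk N k1 k2 k3 ->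
  cfg (Xs N N.+1 [:: k3]) (Xs N N.+2 [:: k1; k2]) s t -> valid s t Z ->
  Pt s t Z = [set col N k2] -> Pt t s Z = [set col N N.+2] ->
  exists u v, [/\ u \in Z, v \notin Z & cr (s u) (t u) (s v) (t v)].
Proof.
move=> hk0 [hs ht e1 e2] hv hP hQ.
set S := (\sum_(u in Z) \sum_(v in ~: Z) cr (s u) (t u) (s v) (t v))%N.
have hd : forall u v, u \in Z -> v \notin Z ->
    [/\ val (s v) != val (s u), val (s v) != val (t u),
        val (t v) != val (s u) & val (t v) != val (t u)].
  move=> u v hu hv'; have huv : u != v by apply: contraNneq hv' => <-.
  rewrite !val_eqE; split.
  - by apply: contra huv => /eqP /hs ->.
  - apply/eqP => e; have := hv v u e; by rewrite hu (negbTE hv').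
  - apply/eqP => e; have := hv u v (esym e); by rewrite hu (negbTE hv').
  - by apply: contra huv => /eqP /ht ->.
have step1 : odd S = \big[addb/false]_(u in Z) \big[addb/false]_(v in ~: Z)
     (bt (s u) (t u) (s v) (+) bt (s u) (t u) (t v)).
  rewrite /S odd_sum_b; apply: eq_bigr => u hu; rewrite odd_sum_b; apply: eq_bigr => v hv'.
  rewrite inE in hv'; have [d1 d2 d3 d4] := hd u v hu hv'.
  by rewrite oddb; apply: cr_xor.
have hx : forall x : nat, (x < N.+3)%N ->
    \big[addb/false]_(u in Z) bt (s u) (t u) x = (k2 < x)%N.
  move=> x hxN; rewrite (@xor_bt _ _ s t Z (@nat_of_ord N.+3) x hs ht) (parity _ hv) hP hQ !card1I !inE /col !inordK.
  - have -> : (N.+2 < x)%N = false by apply/negbTE; rewrite -leqNgt -ltnS.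
    by rewrite addn0 oddb.
  - by [].
  - by case: hk0 => *; lia.
have step2 : odd S = \big[addb/false]_(v in ~: Z) ((k2 < s v)%N (+) (k2 < t v)%N).
  rewrite step1 exchange_big /=; apply: eq_bigr => v _.
  by rewrite big_split /= !hx.
have hc : valid s t (~: Z) := valid_compl hv.
have hP' : Pt s t (~: Z) = [set col N k1].
  rewrite (Pt_compl _ _ hs) e1 e2 (sx6 hk0) hP; case: hk0 => *; setx.
have hQ' : Pt t s (~: Z) = [set col N k3].
  rewrite (Pt_compl _ _ ht) e1 e2 (sx7 hk0) hQ; case: hk0 => *; setx.
have hodd : odd S.
  rewrite step2.
  have -> : \big[addb/false]_(v in ~: Z) ((k2 < s v)%N (+) (k2 < t v)%N) =
     \big[addb/false]_(v in ~: Z) (s v \in [set c : 'I_N.+3 | (k2 < c)%N]) (+)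
     \big[addb/false]_(v in ~: Z) (t v \in [set c : 'I_N.+3 | (k2 < c)%N]).
    by rewrite -big_split /=; apply: eq_bigr => v _; rewrite !inE.
  rewrite !xorcard // -oddD (parity _ hc) hP' hQ' !card1I !inE /col !inordK;
    case: hk0 => *; try lia.
case: (boolP [exists u in Z, exists v in ~: Z, cr (s u) (t u) (s v) (t v)]).
  case/existsP => u /andP[hu /existsP[v /andP[hv' hcr]]].
  exists u, v; split => //; by rewrite inE in hv'.
rewrite negb_exists => /forallP hall.
have : S = 0%N.
  apply: big1 => u hu; apply: big1 => v hv'.
  have := hall u; rewrite hu /= negb_exists => /forallP /(_ v); rewrite hv' /=.
  by move/negbTE ->.
by move=> e; rewrite e in hodd.
Qed.

Local Close Scope ring_scope.

Lemma Phi_lt N (s t s' t' : 'I_N -> 'I_N.+3) u v : u != v ->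
  (forall i, (i != u) && (i != v) ->
     (s' i = s i /\ t' i = t i) \/ (s' i = t i /\ t' i = s i)) ->
  cr (s u) (t u) (s v) (t v) ->
  (forall x y : nat, cr x y (s' u) (t' u) + cr x y (s' v) (t' v) <=
                     cr x y (s u) (t u) + cr x y (s v) (t v))%N ->
  cr (s' u) (t' u) (s' v) (t' v) = false ->
  Phi s' t' < Phi s t.
Proof.
move=> huv h1 h2 h3 h4.
have hsame : forall i (x y : nat), (i != u) && (i != v) ->
    cr (s' i) (t' i) x y = cr (s i) (t i) x y.
  move=> i x y hi; case: (h1 i hi) => [[-> ->]|[-> ->]] //; by rewrite cr_swl.
apply: (dsum_lt (F := fun i j => cr (s i) (t i) (s j) (t j))
                (F' := fun i j => cr (s' i) (t' i) (s' j) (t' j)) huv).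
- move=> i j hi hj /=; rewrite hsame // (cr_sym (s i) (t i) (s' j)) (hsame j) //.
  by rewrite (cr_sym (s j)).
- move=> e he /=.
  rewrite (cr_sym (s' u) (t' u)) (cr_sym (s' v) (t' v)) (cr_sym (s u) (t u)) (cr_sym (s v) (t v)) !hsame //.
  have := h3 (s e) (t e); lia.
- rewrite /= !cr_self h4 (cr_sym (s' v) (t' v)) h4 h2 (cr_sym (s v) (t v)) h2 /=; by [].
Qed.

Definition sw N (u v : 'I_N) (T : Type) (f : 'I_N -> T) := fun i => f (tperm u v i).

Lemma sw_inj N u v (f : 'I_N -> 'I_N.+3) : injective f -> injective (sw u v f).
Proof. move=> hf i j /hf; exact: perm_inj. Qed.

Lemma sw_img N u v (f : 'I_N -> 'I_N.+3) : sw u v f @: setT = f @: setT.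
Proof.
apply/setP => c; apply/imsetP/imsetP => -[i _ ->].
  by exists (tperm u v i).
by exists (tperm u v i) => //; rewrite /sw tpermK.
Qed.

Lemma sw_u N u v (T : Type) (f : 'I_N -> T) : sw u v f u = f v.
Proof. by rewrite /sw tpermL. Qed.
Lemma sw_v N u v (T : Type) (f : 'I_N -> T) : sw u v f v = f u.
Proof. by rewrite /sw tpermR. Qed.
Lemma sw_o N u v (T : Type) (f : 'I_N -> T) i : (i != u) && (i != v) -> sw u v f i = f i.
Proof. case/andP => h1 h2; by rewrite /sw tpermD // eq_sym. Qed.

Local Open Scope ring_scope.

Lemma rsum3 (R : realFieldType) N (G : 'I_N -> R) u v : u != v ->
  \sum_i G i = G u + G v + \sum_(i | (i != u) && (i != v)) G i.
Proof.
move=> huv; rewrite (bigD1 u) //= (bigD1 v) /=; last by rewrite eq_sym.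
rewrite addrA; congr (_ + _); apply: eq_bigl => i; by rewrite andbC.
Qed.

Lemma W_sw_s (R : realFieldType) N (y r : 'I_N -> R) s t u v : u != v ->
  W y r (sw u v s) t = W y r s t + ((wt y r u (s v) + wt y r v (s u)) - (wt y r u (s u) + wt y r v (s v))).
Proof.
move=> huv; rewrite /W !(rsum3 _ huv) sw_u sw_v.
have -> : \sum_(i | (i != u) && (i != v)) (wt y r i (sw u v s i) + wt y r i (t i)) =
          \sum_(i | (i != u) && (i != v)) (wt y r i (s i) + wt y r i (t i)).
  by apply: eq_bigr => i hi; rewrite sw_o.
ring.
Qed.

Lemma W_sw_t (R : realFieldType) N (y r : 'I_N -> R) s t u v : u != v ->
  W y r s (sw u v t) = W y r s t + ((wt y r u (t v) + wt y r v (t u)) - (wt y r u (t u) + wt y r v (t v))).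
Proof. by move=> huv; rewrite W_swap W_sw_s // W_swap. Qed.

Local Close Scope ring_scope.
Local Open Scope ring_scope.

Lemma options (R : realFieldType) N k1 k2 k3 (y r : 'I_N -> R) (s t : 'I_N -> 'I_N.+3) Z u v :
  hk N k1 k2 k3 ->
  cfg (Xs N N.+1 [:: k3]) (Xs N N.+2 [:: k1; k2]) s t -> valid s t Z ->
  Pt s t Z = [set col N k2] -> Pt t s Z = [set col N N.+2] ->
  u \in Z -> v \notin Z -> cr (s u) (t u) (s v) (t v) ->
  exists s' t', [/\ cfg (Xs N N.+1 [:: k3]) (Xs N N.+2 [:: k1; k2]) s' t' \/
                    cfg (Xs N N.+1 [:: k1]) (Xs N N.+2 [:: k2; k3]) s' t',
                 W y r s t <= W y r s' t' & (Phi s' t' < Phi s t)%N].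
Proof.
move=> hk0 hc hv hP hQ hu hv' hcr.
have huv : u != v by apply: contraNneq hv' => <-.
have [hs ht e1 e2] := hc.
have hsu : flipf Z s t u = t u by rewrite /flipf hu.
have htu : flipf Z t s u = s u by rewrite /flipf hu.
have hsv : flipf Z s t v = s v by rewrite /flipf (negbTE hv').
have htv : flipf Z t s v = t v by rewrite /flipf (negbTE hv').
have hoff : forall i, (i != u) && (i != v) ->
   (flipf Z s t i = s i /\ flipf Z t s i = t i) \/ (flipf Z s t i = t i /\ flipf Z t s i = s i).
  move=> i _; rewrite /flipf; case: (i \in Z); by [right|left].
have hfc : cfg (Xs N N.+2 [:: k2; k3]) (Xs N N.+1 [:: k1]) (flipf Z s t) (flipf Z t s).
  by rewrite -(sx10 hk0) -(sx11 hk0); apply: flip_cfg.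
have hch := fun x y => chord x y hcr.
have [hfs hft hf1 hf2] := hfc.
case: (uncross (y u) (r u) (y v) (r v) hcr) => h.
-
  exists (sw u v s), t; split.
  + left; split; [exact: sw_inj | exact: ht | by rewrite sw_img | exact: e2].
  + rewrite W_sw_s //; rewrite /wt; lra.
  + apply: (Phi_lt (u:=u) (v:=v) huv) => //.
    * move=> i hi; left; by rewrite sw_o.
    * move=> x z; rewrite sw_u sw_v (cr_swr x z (s v)); have [h1 h2] := hch x z; lia.
    * by rewrite sw_u sw_v cr_sym cr_swr cr_new2.
-
  exists (sw u v (flipf Z t s)), (flipf Z s t); split.
  + right; split; [exact: sw_inj hft | exact: hfs | by rewrite sw_img | exact: hf1].
  + rewrite [W y r (sw _ _ _) _]W_swap W_sw_t // W_flip htu htv; rewrite /wt; lra.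
  + rewrite Phi_swap; apply: (Phi_lt (u:=u) (v:=v) huv) => //.
    * move=> i hi; rewrite sw_o //; exact: hoff.
    * move=> x z; rewrite sw_u sw_v hsu htu hsv htv (cr_swr x z (s v)).
      have [h1 h2] := hch x z; lia.
    * by rewrite sw_u sw_v hsu htu hsv htv cr_sym cr_swl cr_new1.
-
  exists (flipf Z t s), (sw u v (flipf Z s t)); split.
  + right; split; [exact: hft | exact: sw_inj hfs | exact: hf2 | by rewrite sw_img].
  + rewrite [W y r _ (sw _ _ _)]W_swap W_sw_s // W_flip hsu hsv; rewrite /wt; lra.
  + rewrite Phi_swap; apply: (Phi_lt (u:=u) (v:=v) huv) => //.
    * move=> i hi; rewrite sw_o //; exact: hoff.
    * move=> x z; rewrite sw_u sw_v hsu htu hsv htv (cr_swr x z (s v)).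
      have [h1 h2] := hch x z; lia.
    * by rewrite sw_u sw_v hsu htu hsv htv cr_swl cr_new1.
-
  exists s, (sw u v t); split.
  + left; split; [exact: hs | exact: sw_inj | exact: e1 | by rewrite sw_img].
  + rewrite W_sw_t //; rewrite /wt; lra.
  + apply: (Phi_lt (u:=u) (v:=v) huv) => //.
    * move=> i hi; left; by rewrite sw_o.
    * move=> x z; rewrite sw_u sw_v (cr_swr x z (s v)); have [h1 h2] := hch x z; lia.
    * by rewrite sw_u sw_v cr_swr cr_new2.
Qed.

Local Close Scope ring_scope.
Local Open Scope ring_scope.

Lemma flip_any (R : realFieldType) N (y r : 'I_N -> R) X1 X2 Y1 Y2 (s t : 'I_N -> 'I_N.+3) Z p q :
  cfg X1 X2 s t -> valid s t Z -> Pt s t Z = [set p] -> Pt t s Z = [set q] ->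
  X1 :\ p :|: [set q] = Y1 -> X2 :\ q :|: [set p] = Y2 ->
  [/\ cfg Y1 Y2 (flipf Z s t) (flipf Z t s), W y r (flipf Z s t) (flipf Z t s) = W y r s t
    & Phi (flipf Z s t) (flipf Z t s) = Phi s t].
Proof.
move=> hc hv hP hQ <- <-; split; [exact: flip_cfg | exact: W_flip | exact: Phi_flip].
Qed.

Lemma main_ind (R : realFieldType) N k1 k2 k3 (y r : 'I_N -> R) (UL : R) :
  hk N k1 k2 k3 ->
  (forall s t, cfg (Xs N N.+1 [:: k2]) (Xs N N.+2 [:: k1; k3]) s t -> W y r s t <= UL) ->
  forall n s t, (Phi s t < n)%N ->
  cfg (Xs N N.+1 [:: k3]) (Xs N N.+2 [:: k1; k2]) s t \/
  cfg (Xs N N.+1 [:: k1]) (Xs N N.+2 [:: k2; k3]) s t -> W y r s t <= UL.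
Proof.
move=> hk0 HL; elim=> [//|n IH].
have hM : forall s t, (Phi s t < n.+1)%N ->
    cfg (Xs N N.+1 [:: k3]) (Xs N N.+2 [:: k1; k2]) s t -> W y r s t <= UL.
  move=> s t hn hc.
  have hp : col N k2 \in Xs N N.+1 [:: k3] :\: Xs N N.+2 [:: k1; k2] by rewrite (sx6 hk0) !inE eqxx orbT.
  have [Z [q [hv hP hQ hq]]] := chain_ex hc hp.
  rewrite (sx7 hk0) in hq; case/set2P: hq => eq; subst q.
  - have [hc' <- _] := flip_any y r hc hv hP hQ (sx8 hk0) (sx9 hk0).
    exact: HL.
  - have [u [v [hu hv' hcr]]] := cross_ex hk0 hc hv hP hQ.
    have [s' [t' [hc' hW hPhi]]] := options y r hk0 hc hv hP hQ hu hv' hcr.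
    apply: le_trans hW _; apply: IH => //; exact: leq_trans hPhi hn.
move=> s t hn [hc|hc]; first exact: hM.
have hp : col N k2 \in Xs N N.+1 [:: k1] :\: Xs N N.+2 [:: k2; k3] by rewrite (sx12 hk0) !inE eqxx.
have [Z [q [hv hP hQ hq]]] := chain_ex hc hp.
rewrite (sx13 hk0) in hq; case/set2P: hq => eq; subst q.
- have [hc' <- _] := flip_any y r hc hv hP hQ (sx14 hk0) (sx15 hk0).
  exact: HL.
- have [hc' hW hPhi] := flip_any y r hc hv hP hQ (sx16 hk0) (sx17 hk0).
  rewrite -hW W_swap; apply: hM; last exact: cfg_swap.
  by rewrite Phi_swap hPhi.
Qed.

Local Close Scope ring_scope.
Local Open Scope ring_scope.

Lemma Uentry (R : realFieldType) N (y r : 'I_N -> R) (Jn : seq nat) i (c : 'I_N) :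
  (\matrix_(i < N, c < N) xvec y r (nth 0%R (map Posz Jn) c) i 0) i c =
  `|y i + (nth 0%N Jn c)%:R * r i|.
Proof.
rewrite !mxE; case: (ltnP c (size Jn)) => h.
  by rewrite (nth_map 0%N).
by rewrite !nth_default ?size_map.
Qed.

Lemma U1 (R : realFieldType) N (y r : 'I_N -> R) (Jn : seq nat) (s : 'I_N -> 'I_N.+3) :
  uniq Jn -> size Jn = N -> injective s -> (forall i, val (s i) \in Jn) ->
  \sum_i wt y r i (s i) <= Uperm y r (map Posz Jn).
Proof.
move=> hu hsz hs hin.
have hf : forall i, (index (val (s i)) Jn < N)%N by move=> i; have := hin i; rewrite -index_mem hsz.
pose f i := Ordinal (hf i).
have finj : injective f.
  move=> i j /(congr1 val) /= e; apply: hs; apply: val_inj.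
  by rewrite -(nth_index 0%N (hin i)) e (nth_index 0%N (hin j)).
rewrite /Uperm /upm.
set A := \matrix_(i < N, c < N) _.
have -> : \sum_i wt y r i (s i) = \sum_i A i (perm finj i).
  apply: eq_bigr => i _; by rewrite Uentry permE /= (nth_index 0%N (hin i)).
exact: (le_bigmax _ (fun p : 'S_N => \sum_i A i (p i)) (perm finj)).
Qed.

Lemma U2 (R : realFieldType) N (y r : 'I_N -> R) (Jn : seq nat) :
  uniq Jn -> size Jn = N -> (forall j, j \in Jn -> (j < N.+3)%N) ->
  exists s : 'I_N -> 'I_N.+3, [/\ injective s, s @: setT = [set c : 'I_N.+3 | val c \in Jn]
     & \sum_i wt y r i (s i) = Uperm y r (map Posz Jn)].
Proof.
move=> hu hsz hlt.
rewrite /Uperm; set A := \matrix_(i < N, c < N) _.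
have [p hp] : exists p : 'S_N, upm A = \sum_i A i (p i).
  rewrite /upm; apply: (big_ind (fun v => exists p : 'S_N, v = \sum_i A i (p i))).
  - exists 1%g; apply: eq_bigr => i _; by rewrite perm1.
  - move=> a b [p1 ->] [p2 ->].
    case/orP: (le_total (\sum_i A i (p1 i)) (\sum_i A i (p2 i))) => h.
      by exists p2; rewrite max_r.
    by exists p1; rewrite max_l.
  - move=> p _; by exists p.
have hpi : forall i, (p i < size Jn)%N by move=> i; rewrite hsz.
pose s i : 'I_N.+3 := inord (nth 0%N Jn (p i)).
have hsv : forall i, nat_of_ord (s i) = nth 0%N Jn (p i).
  move=> i; rewrite /s inordK // ltnS -ltnS; apply: hlt; exact: mem_nth.
have hs : injective s.
  move=> i j /(congr1 (@nat_of_ord _)); rewrite !hsv => e.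
  apply: perm_inj; apply/eqP; have := nth_uniq 0%N (hpi i) (hpi j) hu; rewrite e eqxx => h; exact: (esym h).
exists s; split => //.
- apply/eqP; rewrite eqEcard; apply/andP; split.
    apply/subsetP => c /imsetP[i _ ->]; rewrite inE /= hsv; exact: mem_nth.
  rewrite (card_imset _ hs) cardsT card_ord.
  have hidx : forall c : 'I_N.+3, val c \in Jn -> (index (val c) Jn < N)%N.
    by move=> c hc; move: hc; rewrite -index_mem hsz.
  pose g (k : 'I_N) : 'I_N.+3 := inord (nth 0%N Jn k).
  apply: leq_trans (_ : #|g @: [set: 'I_N]| <= N)%N; last by apply: leq_trans (leq_imset_card g _) _; rewrite cardsT card_ord.
  apply: subset_leq_card; apply/subsetP => c; rewrite inE => hc.
  apply/imsetP; exists (Ordinal (hidx c hc)) => //.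
  by rewrite /g /= nth_index // inord_val.
- rewrite hp; apply: eq_bigr => i _; by rewrite Uentry /wt /= hsv.
Qed.

Local Close Scope ring_scope.

Definition Jn (m : nat) (K : seq nat) := [seq j <- iota 1 m | j \notin K].

Lemma range_Jn m K : range_minus m K = map Posz (Jn m K).
Proof. by []. Qed.

Lemma Jn_uniq m K : uniq (Jn m K).
Proof. exact/filter_uniq/iota_uniq. Qed.

Lemma Jn_lt N m K : m <= N.+2 -> forall j, j \in Jn m K -> j < N.+3.
Proof. move=> hm j; rewrite mem_filter mem_iota => /andP[_ /andP[_ h]]; lia. Qed.

Lemma Xs_Jn N m K : Xs N m K = [set c : 'I_N.+3 | val c \in Jn m K].
Proof.
apply/setP => c; rewrite !inE mem_filter mem_iota.
case: (val c \in K); rewrite /= ?andbF //; lia.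
Qed.

Lemma size_Jn1 m k : 0 < k <= m -> size (Jn m [:: k]) = m.-1.
Proof.
move=> hk; rewrite size_filter.
have := count_predC (mem [:: k]) (iota 1 m); rewrite size_iota.
have -> : count (mem [:: k]) (iota 1 m) = 1.
  have -> : count (mem [:: k]) (iota 1 m) = count (pred1 k) (iota 1 m).
    by apply: eq_count => j; rewrite !inE.
  by rewrite count_uniq_mem ?iota_uniq // mem_iota; case/andP: hk => h1 h2; rewrite h1 /=; lia.
have -> : count (fun j => j \notin [:: k]) (iota 1 m) = count (predC (mem [:: k])) (iota 1 m) by [].
lia.
Qed.

Lemma size_Jn2 m a b : 0 < a -> a < b -> b <= m -> size (Jn m [:: a; b]) = m.-2.
Proof.
move=> ha hab hb; rewrite size_filter.
have := count_predC (mem [:: a; b]) (iota 1 m); rewrite size_iota.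
have -> : count (mem [:: a; b]) (iota 1 m) = 2.
  have -> : count (mem [:: a; b]) (iota 1 m) = count (predU (pred1 a) (pred1 b)) (iota 1 m).
    by apply: eq_count => j; rewrite !inE.
  have := count_predUI (pred1 a) (pred1 b) (iota 1 m).
  have -> : count (predI (pred1 a) (pred1 b)) (iota 1 m) = count pred0 (iota 1 m).
    apply: eq_count => j /=; apply/negbTE/negP => /andP[/eqP -> /eqP e]; lia.
  rewrite count_pred0 !count_uniq_mem ?iota_uniq // !mem_iota.
  have -> : (1 <= a < 1 + m) = true by apply/idP; lia.
  have -> : (1 <= b < 1 + m) = true by apply/idP; lia.
  lia.
have -> : count (fun j => j \notin [:: a; b]) (iota 1 m) = count (predC (mem [:: a; b])) (iota 1 m) by [].
lia.
Qed.

Local Close Scope ring_scope.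

Lemma L_case (R : realFieldType) N k1 k2 k3 (y r : 'I_N -> R) (s t : 'I_N -> 'I_N.+3) :
  hk N k1 k2 k3 -> cfg (Xs N N.+1 [:: k2]) (Xs N N.+2 [:: k1; k3]) s t ->
  exists s' t', (cfg (Xs N N.+1 [:: k3]) (Xs N N.+2 [:: k1; k2]) s' t' \/
                 cfg (Xs N N.+1 [:: k1]) (Xs N N.+2 [:: k2; k3]) s' t') /\
                W y r s' t' = W y r s t.
Proof.
move=> hk0 hc.
have hp : col N k1 \in Xs N N.+1 [:: k2] :\: Xs N N.+2 [:: k1; k3] by rewrite (sx0 hk0) !inE eqxx.
have [Z [q [hv hP hQ hq]]] := chain_ex hc hp.
rewrite (sx1 hk0) in hq; case/set2P: hq => eq; subst q.
- have [hc' hW _] := flip_any y r hc hv hP hQ (sx2 hk0) (sx3 hk0).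
  by exists (flipf Z s t), (flipf Z t s); split; [right|].
- have [hc' hW _] := flip_any y r hc hv hP hQ (sx4 hk0) (sx5 hk0).
  exists (flipf Z t s), (flipf Z s t); split; first by left; exact: cfg_swap.
  by rewrite W_swap.
Qed.

Local Open Scope ring_scope.

Lemma W_split (R : realFieldType) N (y r : 'I_N -> R) s t :
  W y r s t = \sum_i wt y r i (s i) + \sum_i wt y r i (t i).
Proof. by rewrite /W big_split. Qed.

Lemma cfg_le (R : realFieldType) N (y r : 'I_N -> R) m1 K1 m2 K2 s t :
  size (Jn m1 K1) = N -> size (Jn m2 K2) = N ->
  cfg (Xs N m1 K1) (Xs N m2 K2) s t ->
  W y r s t <= Uperm y r (range_minus m1 K1) + Uperm y r (range_minus m2 K2).
Proof.
move=> h1 h2 [hs ht e1 e2]; rewrite W_split !range_Jn.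
apply: lerD; apply: U1 => //; try exact: Jn_uniq.
- move=> i; have : s i \in Xs N m1 K1 by rewrite -e1 imset_f.
  by rewrite Xs_Jn inE.
- move=> i; have : t i \in Xs N m2 K2 by rewrite -e2 imset_f.
  by rewrite Xs_Jn inE.
Qed.

Lemma cfg_ex (R : realFieldType) N (y r : 'I_N -> R) m1 K1 m2 K2 :
  size (Jn m1 K1) = N -> size (Jn m2 K2) = N -> (m1 <= N.+2)%N -> (m2 <= N.+2)%N ->
  exists s t, cfg (Xs N m1 K1) (Xs N m2 K2) s t /\
  W y r s t = Uperm y r (range_minus m1 K1) + Uperm y r (range_minus m2 K2).
Proof.
move=> h1 h2 hm1 hm2.
have [s [hs e1 w1]] := U2 y r (Jn_uniq m1 K1) h1 (Jn_lt hm1).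
have [t [ht e2 w2]] := U2 y r (Jn_uniq m2 K2) h2 (Jn_lt hm2).
exists s, t; split; first by split => //; rewrite Xs_Jn.
by rewrite W_split w1 w2 !range_Jn.
Qed.

Theorem theorem1 (R : realFieldType) (N : nat) (y r : 'I_N -> R)
  (k1 k2 k3 : nat) :
  (2 <= N)%N -> (1 <= k1)%N -> (k1 < k2)%N -> (k2 < k3)%N -> (k3 <= N.+1)%N ->
  Uperm y r (range_minus N.+1 [:: k2]) + Uperm y r (range_minus N.+2 [:: k1; k3])
  = Num.max
      (Uperm y r (range_minus N.+1 [:: k3]) + Uperm y r (range_minus N.+2 [:: k1; k2]))
      (Uperm y r (range_minus N.+1 [:: k1]) + Uperm y r (range_minus N.+2 [:: k2; k3])).
Proof.
move=> hN h1 h12 h23 h3.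
have hk0 : hk N k1 k2 k3 by split.
have s1 : forall k, (0 < k <= N.+1)%N -> size (Jn N.+1 [:: k]) = N.
  by move=> k hk; rewrite size_Jn1.
have s2 : forall a b, (0 < a)%N -> (a < b)%N -> (b <= N.+2)%N -> size (Jn N.+2 [:: a; b]) = N.
  by move=> a b ha hab hb; rewrite size_Jn2.
have sL1 : size (Jn N.+1 [:: k2]) = N by apply: s1; lia.
have sL2 : size (Jn N.+2 [:: k1; k3]) = N by apply: s2; lia.
have sM1 : size (Jn N.+1 [:: k3]) = N by apply: s1; lia.
have sM2 : size (Jn N.+2 [:: k1; k2]) = N by apply: s2; lia.
have sR1 : size (Jn N.+1 [:: k1]) = N by apply: s1; lia.
have sR2 : size (Jn N.+2 [:: k2; k3]) = N by apply: s2; lia.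
have hm1 : (N.+1 <= N.+2)%N by [].
have hm2 : (N.+2 <= N.+2)%N by [].
have HL := fun s t => @cfg_le R N y r _ _ _ _ s t sL1 sL2.
have hM : Uperm y r (range_minus N.+1 [:: k3]) + Uperm y r (range_minus N.+2 [:: k1; k2]) <=
          Uperm y r (range_minus N.+1 [:: k2]) + Uperm y r (range_minus N.+2 [:: k1; k3]).
  have [s [t [hc <-]]] := cfg_ex y r sM1 sM2 hm1 hm2.
  apply: (main_ind hk0 HL (n := (Phi s t).+1)) => //; by left.
have hR : Uperm y r (range_minus N.+1 [:: k1]) + Uperm y r (range_minus N.+2 [:: k2; k3]) <=
          Uperm y r (range_minus N.+1 [:: k2]) + Uperm y r (range_minus N.+2 [:: k1; k3]).
  have [s [t [hc <-]]] := cfg_ex y r sR1 sR2 hm1 hm2.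
  apply: (main_ind hk0 HL (n := (Phi s t).+1)) => //; by right.
apply: le_anti; apply/andP; split; last by rewrite ge_max hM hR.
have [s [t [hc <-]]] := cfg_ex y r sL1 sL2 hm1 hm2.
have [s' [t' [[hc'|hc'] <-]]] := L_case y r hk0 hc; rewrite le_max.
- by rewrite (cfg_le y r sM1 sM2 hc').
- by rewrite (cfg_le y r sR1 sR2 hc') orbT.
Qed.

Local Close Scope ring_scope.
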